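(* Assume $0<\inf_n a_n\le\sup_n a_n<\infty$. Let $x_0\in\mathbb{R}$ be such that the Lyapunov exponent $\gamma(x_0)=\lim_{n\to\infty}\frac1n\log\|T_n(x_0)\|$ exists and $\gamma(x_0)>0$. Then either $x_0$ is a pure point of $\rho$ (i.e. $\rho(\{x_0\})>0$), or else $\displaystyle \frac{p_n(x_0)^2}{K_n(x_0,x_0)}$ does not tend to $0$ (equivalently, by the paper's Theorem 2.2, $\rho$ fails the Nevai condition at $x_0$).
   Context: Let $\rho$ be a probability measure on $\mathbb{R}$ with compact but infinite support, $p_n$ ($n\ge0$) its orthonormal polynomials (real coefficients, positive leading coefficient, $p_0=1$), and $\{a_n,b_n\}_{n\ge1}$ ($a_n>0$) its Jacobi parameters, defined by $xp_n(x)=a_{n+1}p_{n+1}(x)+b_{n+1}p_n(x)+a_np_{n-1}(x)$, $p_{-1}=0$. $K_n(x,y)=\sum_{j=0}^n p_j(x)p_j(y)$. The transfer matrices are $T_n(x_0)=A_n(x_0)\cdots A_1(x_0)$ with $A_j(x_0)=\frac{1}{a_j}\begin{pmatrix}x_0-b_j&-1\\ a_j^2&0\end{pmatrix}$, so that $\binom{p_n(x_0)}{a_np_{n-1}(x_0)}=T_n(x_0)\binom10$. The Nevai condition at $x_0$ means $K_n(x,x_0)^2\,d\rho(x)/K_n(x_0,x_0)\to\delta_{x_0}$ weakly. *)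

(* Defs.v *)
From Stdlib Require Import Reals Lra List.
Open Scope R_scope.

(** A (Borel) probability measure rho on R is encoded by its distribution
    function F(x) = rho((-oo, x]) : nondecreasing, right-continuous,
    F -> 0 at -oo, F -> 1 at +oo.  Compact support is encoded by
    F a = 0 and F b = 1 for some a < b (so supp rho is contained in (a,b]). *)

Definition nondecreasing (F : R -> R) : Prop := forall x y, x <= y -> F x <= F y.

Definition right_continuous (F : R -> R) : Prop :=
  forall x eps, 0 < eps -> exists delta, 0 < delta /\
    forall y, x <= y < x + delta -> Rabs (F y - F x) < eps.

Definition compact_prob_distr (F : R -> R) (a b : R) : Prop :=
  a < b /\ nondecreasing F /\ right_continuous F /\ F a = 0 /\ F b = 1.

Definition in_support (F : R -> R) (x : R) : Prop :=
  forall eps, 0 < eps -> F (x - eps) < F (x + eps).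

Definition infinite_support (F : R -> R) : Prop :=
  forall l : list R, exists x, in_support F x /\ ~ In x l.

(** rho({x0}) > 0 : rho({x0}) = inf_{x < x0} rho((x, x0]) = inf_{x<x0} (F x0 - F x). *)
Definition pure_point (F : R -> R) (x0 : R) : Prop :=
  exists c, 0 < c /\ forall x, x < x0 -> c <= F x0 - F x.

(** For rho supported in (a,b] (F a = 0, F b = 1) and continuous f, the
    integral of f d rho is the limit of the Stieltjes sums over the uniform
    partitions of [a,b] with right-endpoint tags. *)
Fixpoint sum_1_to (g : nat -> R) (N : nat) : R :=
  match N with
  | O => 0
  | S k => sum_1_to g k + g (S k)
  end.

Definition grid (a b : R) (N i : nat) : R := a + INR i * (b - a) / INR N.

Definition stieltjes_sum (F : R -> R) (a b : R) (f : R -> R) (N : nat) : R :=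
  sum_1_to (fun i => f (grid a b N i) * (F (grid a b N i) - F (grid a b N (pred i)))) N.

Definition integral_is (F : R -> R) (a b : R) (f : R -> R) (I : R) : Prop :=
  Un_cv (stieltjes_sum F a b f) I.

(** * Orthonormal polynomials.
    c n k is the coefficient of x^k in p_n (real coefficients). *)
Definition poly_eval (c : nat -> nat -> R) (n : nat) (x : R) : R :=
  sum_f_R0 (fun k => c n k * x ^ k) n.

Definition orthonormal_polys (F : R -> R) (a b : R) (c : nat -> nat -> R) : Prop :=
  (forall n k, (n < k)%nat -> c n k = 0) /\
  (forall n, 0 < c n n) /\
  (forall x, poly_eval c 0 x = 1) /\
  (forall n m, integral_is F a b (fun x => poly_eval c n x * poly_eval c m x)
                 (if Nat.eqb n m then 1 else 0)).

(** Jacobi parameters {a_n, b_n}_{n>=1}, a_n > 0 :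
    x p_n = a_{n+1} p_{n+1} + b_{n+1} p_n + a_n p_{n-1}, with p_{-1} = 0
    (so the value ja 0 is irrelevant). *)
Definition jacobi_params (c : nat -> nat -> R) (ja jb : nat -> R) : Prop :=
  (forall n, (1 <= n)%nat -> 0 < ja n) /\
  (forall n x,
     x * poly_eval c n x =
       ja (S n) * poly_eval c (S n) x + jb (S n) * poly_eval c n x
       + (match n with O => 0 | S m => ja n * poly_eval c m x end)).

Definition CD_kernel (c : nat -> nat -> R) (n : nat) (x y : R) : R :=
  sum_f_R0 (fun j => poly_eval c j x * poly_eval c j y) n.

Record mat2 : Type := Mat2 { m11 : R; m12 : R; m21 : R; m22 : R }.

Definition mat2_mul (A B : mat2) : mat2 :=
  Mat2 (m11 A * m11 B + m12 A * m21 B) (m11 A * m12 B + m12 A * m22 B)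
       (m21 A * m11 B + m22 A * m21 B) (m21 A * m12 B + m22 A * m22 B).

Definition mat2_id : mat2 := Mat2 1 0 0 1.

Definition A_mat (ja jb : nat -> R) (j : nat) (x0 : R) : mat2 :=
  Mat2 ((x0 - jb j) / ja j) (- 1 / ja j) (ja j ^ 2 / ja j) 0.

Fixpoint transfer (ja jb : nat -> R) (n : nat) (x0 : R) : mat2 :=
  match n with
  | O => mat2_id
  | S k => mat2_mul (A_mat ja jb (S k) x0) (transfer ja jb k x0)
  end.

Definition opnorm_is (M : mat2) (r : R) : Prop :=
  is_lub (fun t => exists v1 v2, v1 ^ 2 + v2 ^ 2 = 1 /\
            t = sqrt ((m11 M * v1 + m12 M * v2) ^ 2 + (m21 M * v1 + m22 M * v2) ^ 2)) r.

Definition lyapunov_exponent_is (ja jb : nat -> R) (x0 g : R) : Prop :=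
  exists nrm : nat -> R,
    (forall n, opnorm_is (transfer ja jb n x0) (nrm n)) /\
    Un_cv (fun n => ln (nrm n) / INR n) g.

(* Main.v *)
Require Import Defs.
From Stdlib Require Import Reals List.
From Stdlib Require Import Lra Lia Psatz Classical.
Open Scope R_scope.

Lemma cv_const : forall l, Un_cv (fun _ => l) l.
Proof. intros l e He; exists 0%nat; intros; unfold Rdist; rewrite Rminus_diag, Rabs_R0; lra. Qed.

Lemma cv_scal : forall u l k, Un_cv u l -> Un_cv (fun n => k * u n) (k*l).
Proof. intros. apply (CV_mult (fun _ => k) u); auto using cv_const. Qed.

Lemma cv_ext : forall u v l, (forall n, u n = v n) -> Un_cv u l -> Un_cv v l.
Proof. intros u v l H Hu e He; destruct (Hu e He) as [N HN]; exists N; intros n Hn; rewrite <- H; auto. Qed.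

Lemma cv_le_ev : forall u v l1 l2 N, (forall n, (n>=N)%nat -> u n <= v n) ->
  Un_cv u l1 -> Un_cv v l2 -> l1 <= l2.
Proof.
  intros u v l1 l2 N H Hu Hv. destruct (Rle_or_lt l1 l2) as [|Hlt]; auto.
  destruct (Hu ((l1-l2)/2)) as [N1 H1]; [lra|].
  destruct (Hv ((l1-l2)/2)) as [N2 H2]; [lra|].
  set (n := (N + N1 + N2)%nat).
  specialize (H1 n ltac:(unfold n; lia)); specialize (H2 n ltac:(unfold n; lia)).
  specialize (H n ltac:(unfold n; lia)). unfold Rdist in *.
  apply Rabs_def2 in H1; apply Rabs_def2 in H2; lra.
Qed.

Lemma sum1_ext : forall f g N, (forall i, f i = g i) -> sum_1_to f N = sum_1_to g N.
Proof. intros f g N H; induction N; simpl; auto. rewrite IHN, H; auto. Qed.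
Lemma sum1_plus : forall f g N, sum_1_to (fun i => f i + g i) N = sum_1_to f N + sum_1_to g N.
Proof. intros f g N; induction N; simpl; [lra|]. rewrite IHN; lra. Qed.
Lemma sum1_scal : forall f k N, sum_1_to (fun i => k * f i) N = k * sum_1_to f N.
Proof. intros f k N; induction N; simpl; [lra|]. rewrite IHN; lra. Qed.
Lemma sum1_le : forall f g N, (forall i, (1 <= i <= N)%nat -> f i <= g i) -> sum_1_to f N <= sum_1_to g N.
Proof. intros f g N H; induction N; simpl; [lra|].
  apply Rplus_le_compat; [apply IHN; intros; apply H; lia| apply H; lia]. Qed.
Lemma sum1_sumf : forall h n N, sum_1_to (fun i => sum_f_R0 (fun j => h j i) n) N =
  sum_f_R0 (fun j => sum_1_to (h j) N) n.
Proof. intros h n N; induction n; simpl; [reflexivity|].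
  rewrite sum1_plus, IHn; reflexivity. Qed.

Section S.
Variables (F : R -> R) (a b : R).

Lemma S_ext : forall f g N, (forall x, f x = g x) -> stieltjes_sum F a b f N = stieltjes_sum F a b g N.
Proof. intros; unfold stieltjes_sum; apply sum1_ext; intros; rewrite H; auto. Qed.
Lemma S_plus : forall f g N, stieltjes_sum F a b (fun x => f x + g x) N = stieltjes_sum F a b f N + stieltjes_sum F a b g N.
Proof. intros; unfold stieltjes_sum; rewrite <- sum1_plus; apply sum1_ext; intros; ring. Qed.
Lemma S_scal : forall f k N, stieltjes_sum F a b (fun x => k * f x) N = k * stieltjes_sum F a b f N.
Proof. intros; unfold stieltjes_sum; rewrite <- sum1_scal; apply sum1_ext; intros; ring. Qed.
Lemma S_sumf : forall h n N, stieltjes_sum F a b (fun x => sum_f_R0 (fun j => h j x) n) N =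
   sum_f_R0 (fun j => stieltjes_sum F a b (h j) N) n.
Proof. intros; unfold stieltjes_sum.
  rewrite <- (sum1_sumf (fun j i => h j (grid a b N i) * (F (grid a b N i) - F (grid a b N (pred i))))).
  apply sum1_ext; intros.
  generalize (F (grid a b N i) - F (grid a b N (pred i))); intro w.
  induction n; simpl; [ring|]. rewrite <- IHn; ring. Qed.

Lemma grid_in : forall N i, a < b -> (1 <= i <= N)%nat ->
  a <= grid a b N i <= b /\ grid a b N (pred i) <= grid a b N i.
Proof.
  intros N i Hab Hi. unfold grid.
  assert (HN : 0 < INR N) by (apply lt_0_INR; lia).
  assert (Hi1 : INR i <= INR N) by (apply le_INR; lia).
  assert (Hi2 : INR (pred i) <= INR i) by (apply le_INR; lia).
  assert (Hi0 : 0 <= INR (pred i)) by apply pos_INR.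
  assert (E1 : INR i * (b - a) / INR N * INR N = INR i * (b-a)) by (field; lra).
  assert (E2 : INR (pred i) * (b - a) / INR N * INR N = INR (pred i) * (b-a)) by (field; lra).
  assert (INR i * (b - a) / INR N <= b - a).
  { apply Rmult_le_reg_r with (INR N); auto. rewrite E1. nra. }
  assert (0 <= INR (pred i) * (b - a) / INR N).
  { apply Rmult_le_reg_r with (INR N); auto. rewrite E2. nra. }
  assert (INR (pred i) * (b - a) / INR N <= INR i * (b - a) / INR N).
  { apply Rmult_le_reg_r with (INR N); auto. rewrite E1, E2. nra. }
  lra.
Qed.

Hypothesis Hrho : compact_prob_distr F a b.

Lemma S_le : forall f g N, (forall x, a <= x <= b -> f x <= g x) ->
  stieltjes_sum F a b f N <= stieltjes_sum F a b g N.
Proof.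
  intros f g N H. unfold stieltjes_sum. apply sum1_le. intros i Hi.
  destruct Hrho as [Hab [Hmon _]].
  destruct (grid_in N i Hab Hi) as [H1 H2].
  apply Rmult_le_compat_r. specialize (Hmon _ _ H2); lra. apply H; auto.
Qed.

Lemma S_one : forall N, stieltjes_sum F a b (fun _ => 1) N <= 1.
Proof.
  intros N. destruct Hrho as [Hab [Hmon [_ [Fa Fb]]]].
  assert (forall k, sum_1_to (fun i => 1 * (F (grid a b N i) - F (grid a b N (pred i)))) k
     = F (grid a b N k) - F (grid a b N 0)).
  { induction k; simpl; [ring|]. rewrite IHk. ring. }
  unfold stieltjes_sum; rewrite H. destruct N.
  - simpl; lra.
  - unfold grid. replace (a + INR (S N) * (b-a) / INR (S N)) with b.
    replace (a + INR 0 * (b-a) / INR (S N)) with a. lra.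
    simpl (INR 0); field; apply not_0_INR; lia.
    field; apply not_0_INR; lia.
Qed.

Lemma I_plus : forall f g l1 l2, integral_is F a b f l1 -> integral_is F a b g l2 ->
  integral_is F a b (fun x => f x + g x) (l1 + l2).
Proof. intros; unfold integral_is. eapply cv_ext; [intros; symmetry; apply S_plus|].
  apply CV_plus; auto. Qed.
Lemma I_scal : forall f k l, integral_is F a b f l -> integral_is F a b (fun x => k * f x) (k * l).
Proof. intros; unfold integral_is. eapply cv_ext; [intros; symmetry; apply S_scal|].
  apply cv_scal; auto. Qed.
Lemma I_ext : forall f g l, (forall x, f x = g x) -> integral_is F a b f l -> integral_is F a b g l.
Proof. intros; unfold integral_is. eapply cv_ext; [intros; apply S_ext; eauto|]. auto. Qed.
Lemma I_sumf : forall h l n, (forall j, (j <= n)%nat -> integral_is F a b (h j) (l j)) ->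
  integral_is F a b (fun x => sum_f_R0 (fun j => h j x) n) (sum_f_R0 l n).
Proof. intros h l n; induction n; intros H; simpl.
  - apply H; lia.
  - apply I_plus; [apply IHn; intros; apply H; lia| apply H; lia]. Qed.
End S.

Lemma I_eql : forall F a b f l l', integral_is F a b f l -> l = l' -> integral_is F a b f l'.
Proof. intros; subst; auto. Qed.

Lemma Rabs_le_between : forall x r, Rabs x <= r -> -r <= x <= r.
Proof. intros x r H; unfold Rabs in H; destruct (Rcase_abs x); lra. Qed.


Section P.
Variables (F : R -> R) (a b : R) (c : nat -> nat -> R) (ja jb : nat -> R).
Hypothesis Hrho : compact_prob_distr F a b.
Hypothesis Hp : orthonormal_polys F a b c.
Hypothesis Hjac : jacobi_params c ja jb.
Notation p := (poly_eval c).

Lemma Iorth : forall n m, integral_is F a b (fun x => p n x * p m x) (if Nat.eqb n m then 1 else 0).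
Proof. destruct Hp as [_ [_ [_ H]]]; auto. Qed.
Lemma Iorth_eq : forall n, integral_is F a b (fun x => p n x * p n x) 1.
Proof. intros n; generalize (Iorth n n); rewrite Nat.eqb_refl; auto. Qed.
Lemma Iorth_neq : forall n m, n <> m -> integral_is F a b (fun x => p n x * p m x) 0.
Proof. intros n m H; generalize (Iorth n m); rewrite (proj2 (Nat.eqb_neq n m) H); auto. Qed.

Lemma rec : forall n x, x * p n x = ja (S n) * p (S n) x + jb (S n) * p n x
       + (match n with O => 0 | S m => ja n * p m x end).
Proof. destruct Hjac as [_ H]; auto. Qed.

Lemma Ixpp : forall n, integral_is F a b (fun x => x * p n x * p n x) (jb (S n)).
Proof.
  intros n.
  apply I_ext with (fun x => (ja (S n) * (p (S n) x * p n x) + jb (S n) * (p n x * p n x))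
     + (match n with O => 0 | S m => ja n * (p m x * p n x) end)).
  { intros x. rewrite (rec n x). destruct n; ring. }
  eapply I_eql; [|instantiate (1 := (ja (S n) * 0 + jb (S n) * 1) + 0); ring].
  apply I_plus; [apply I_plus; apply I_scal|].
  - apply Iorth_neq; lia.
  - apply Iorth_eq.
  - destruct n.
    + apply I_ext with (fun x => 0 * (p 0 x * p 0 x)); [intros; ring|].
      eapply I_eql; [apply I_scal, Iorth_eq| ring].
    + eapply I_eql; [apply I_scal, Iorth_neq; lia| ring].
Qed.

Lemma b_bound : forall n, Rabs (jb (S n)) <= Rabs a + Rabs b.
Proof.
  intros n. set (Rb := Rabs a + Rabs b).
  assert (Hx : forall x, a <= x <= b -> Rabs x <= Rb).
  { intros x Hx. unfold Rb. unfold Rabs; repeat destruct Rcase_abs; lra. }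
  assert (HI : integral_is F a b (fun x => Rb * (p n x * p n x)) (Rb * 1)) by (apply I_scal, Iorth_eq).
  assert (HI2 : integral_is F a b (fun x => -1 * (x * p n x * p n x)) (-1 * jb (S n))) by (apply I_scal, Ixpp).
  assert (Hp2 : forall x, 0 <= p n x * p n x) by (intros; nra).
  apply Rabs_le; split.
  - assert (-1 * jb (S n) <= Rb * 1).
    { refine (cv_le_ev _ _ _ _ 0 _ HI2 HI). intros N _. apply S_le; auto.
      intros x Hx'. specialize (Hx x Hx'). specialize (Hp2 x). apply Rabs_le_between in Hx.
      replace (-1 * (x * p n x * p n x)) with ((-x) * (p n x * p n x)) by ring.
      apply Rmult_le_compat_r; lra. }
    lra.
  - assert (jb (S n) <= Rb * 1).
    { refine (cv_le_ev _ _ _ _ 0 _ (Ixpp n) HI). intros N _. apply S_le; auto.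
      intros x Hx'. specialize (Hx x Hx'). specialize (Hp2 x). apply Rabs_le_between in Hx.
      replace (x * p n x * p n x) with (x * (p n x * p n x)) by ring.
      apply Rmult_le_compat_r; lra. }
    lra.
Qed.


Lemma p0 : forall x, p 0 x = 1.
Proof. destruct Hp as [_ [_ [H _]]]; auto. Qed.

Lemma CD : forall n t x0, (t - x0) * CD_kernel c n t x0 =
  ja (S n) * (p (S n) t * p n x0 - p n t * p (S n) x0).
Proof.
  intros n t x0. induction n.
  - unfold CD_kernel; simpl sum_f_R0. rewrite !p0.
    pose proof (rec 0 t) as H1; pose proof (rec 0 x0) as H2. rewrite p0 in H1, H2. lra.
  - unfold CD_kernel in *; simpl sum_f_R0.
    pose proof (rec (S n) t) as H1; pose proof (rec (S n) x0) as H2.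
    replace ((t - x0) * (sum_f_R0 (fun j => p j t * p j x0) n + p (S n) t * p (S n) x0))
      with ((t - x0) * sum_f_R0 (fun j => p j t * p j x0) n + (t * p (S n) t) * p (S n) x0
             - p (S n) t * (x0 * p (S n) x0)) by ring.
    rewrite IHn, H1, H2. ring.
Qed.

Lemma delta_sum : forall u i n, (i <= n)%nat ->
  sum_f_R0 (fun j => u j * (if Nat.eqb j i then 1 else 0)) n = u i.
Proof.
  intros u i n; induction n; intros H.
  - assert (i = 0)%nat by lia; subst; simpl; ring.
  - cbn [sum_f_R0]. destruct (Nat.eq_dec i (S n)).
    + subst. rewrite Nat.eqb_refl.
      assert (sum_f_R0 (fun j => u j * (if Nat.eqb j (S n) then 1 else 0)) n = 0).
      { clear. assert (forall k, (k <= n)%nat -> sum_f_R0 (fun j => u j * (if Nat.eqb j (S n) then 1 else 0)) k = 0).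
        { induction k; intros Hk; cbn [sum_f_R0].
          - replace (Nat.eqb 0 (S n)) with false by reflexivity; ring.
          - rewrite IHk by lia. rewrite (proj2 (Nat.eqb_neq (S k) (S n))) by lia; ring. }
        apply H; lia. }
      rewrite H0; ring.
    + rewrite IHn by lia. rewrite (proj2 (Nat.eqb_neq (S n) i)) by lia; ring.
Qed.

Lemma IK1 : forall n x0, integral_is F a b (fun t => CD_kernel c n t x0) 1.
Proof.
  intros n x0. unfold CD_kernel.
  apply I_ext with (fun t => sum_f_R0 (fun j => p j x0 * (p j t * p 0 t)) n).
  { intros t. rewrite p0. apply sum_eq; intros; ring. }
  eapply I_eql. apply I_sumf with (l := fun j => p j x0 * (if Nat.eqb j 0 then 1 else 0)).
  { intros j _. apply I_scal, Iorth. }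
  rewrite delta_sum by lia. apply p0.
Qed.

Lemma IK2 : forall n x0, integral_is F a b (fun t => CD_kernel c n t x0 * CD_kernel c n t x0)
   (CD_kernel c n x0 x0).
Proof.
  intros n x0. unfold CD_kernel at 3.
  apply I_ext with (fun t => sum_f_R0 (fun i => p i x0 * sum_f_R0 (fun j => p j x0 * (p j t * p i t)) n) n).
  { intros t. unfold CD_kernel. rewrite scal_sum.
    apply sum_eq; intros i _. rewrite scal_sum, scal_sum.
    apply sum_eq; intros; ring. }
  apply I_sumf. intros i Hi.
  eapply I_eql. apply I_scal. apply I_sumf with (l := fun j => p j x0 * (if Nat.eqb j i then 1 else 0)).
  { intros j _. apply I_scal, Iorth. }
  rewrite delta_sum by lia. ring.
Qed.

Lemma IK3 : forall n x0, integral_is F a b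
   (fun t => ((t - x0) * CD_kernel c n t x0) * ((t - x0) * CD_kernel c n t x0))
   (ja (S n) ^ 2 * (p n x0 ^ 2 + p (S n) x0 ^ 2)).
Proof.
  intros n x0.
  apply I_ext with (fun t => (ja (S n) ^ 2 * p n x0 ^ 2) * (p (S n) t * p (S n) t)
     + (-2 * ja (S n) ^ 2 * p n x0 * p (S n) x0) * (p (S n) t * p n t)
     + (ja (S n) ^ 2 * p (S n) x0 ^ 2) * (p n t * p n t)).
  { intros t. rewrite CD. ring. }
  eapply I_eql. apply I_plus; [apply I_plus|]; apply I_scal.
  apply Iorth_eq. apply Iorth_neq; lia. apply Iorth_eq. ring.
Qed.
End P.


Definition chi (al be t : R) : R :=
  if Rlt_dec al t then (if Rle_dec t be then 1 else 0) else 0.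

Lemma minmax_mono : forall x y c d, x <= y -> Rmin (Rmax x c) d <= Rmin (Rmax y c) d.
Proof. intros; unfold Rmin, Rmax; repeat destruct Rle_dec; lra. Qed.

Lemma window : forall F a b al be N, compact_prob_distr F a b -> al < be -> (1 <= N)%nat ->
  stieltjes_sum F a b (chi al be) N <= F be - F (al - (b - a) / INR N).
Proof.
  intros F a b al be N Hrho Hab HN.
  destruct Hrho as [Hlt [Hmon _]].
  set (h := (b - a) / INR N).
  assert (HN' : 0 < INR N) by (apply lt_0_INR; lia).
  assert (Hh : 0 < h) by (unfold h; apply Rdiv_lt_0_compat; lra).
  assert (Hstep : forall k, grid a b N (S k) = grid a b N k + h).
  { intros k; unfold grid, h; rewrite S_INR; field; lra. }
  assert (Hg0 : grid a b N 0 = a) by (unfold grid; simpl; field; lra).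
  assert (HgN : grid a b N N = b) by (unfold grid; field; lra).
  assert (Hcl : forall k, sum_1_to (fun i => chi al be (grid a b N i) *
      (F (grid a b N i) - F (grid a b N (pred i)))) k <=
      F (Rmin (Rmax (grid a b N k) (al - h)) be) - F (al - h)).
  { induction k.
    - simpl. assert (al - h <= Rmin (Rmax (grid a b N 0) (al - h)) be).
      { unfold Rmin, Rmax; repeat destruct Rle_dec; lra. }
      specialize (Hmon _ _ H). lra.
    - simpl sum_1_to. rewrite Hstep. simpl pred.
      destruct (Rlt_dec al (grid a b N k + h)) as [H1|H1];
      [destruct (Rle_dec (grid a b N k + h) be) as [H2|H2]|].
      + assert (Hc : chi al be (grid a b N k + h) = 1) by (unfold chi; repeat destruct Rlt_dec; repeat destruct Rle_dec; lra).
        rewrite Hc. assert (E1 : Rmin (Rmax (grid a b N k + h) (al - h)) be = grid a b N k + h).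
        { unfold Rmin, Rmax; repeat destruct Rle_dec; lra. }
        assert (E2 : Rmin (Rmax (grid a b N k) (al - h)) be = grid a b N k).
        { unfold Rmin, Rmax; repeat destruct Rle_dec; lra. }
        rewrite E2 in IHk. rewrite E1. lra.
      + assert (Hc : chi al be (grid a b N k + h) = 0) by (unfold chi; repeat destruct Rlt_dec; repeat destruct Rle_dec; lra).
        rewrite Hc. assert (HH := Hmon _ _ (minmax_mono (grid a b N k) (grid a b N k + h) (al - h) be ltac:(lra))). lra.
      + assert (Hc : chi al be (grid a b N k + h) = 0) by (unfold chi; repeat destruct Rlt_dec; repeat destruct Rle_dec; lra).
        rewrite Hc. assert (HH := Hmon _ _ (minmax_mono (grid a b N k) (grid a b N k + h) (al - h) be ltac:(lra))). lra. }
  unfold stieltjes_sum. eapply Rle_trans; [apply Hcl|].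
  assert (Rmin (Rmax (grid a b N N) (al - h)) be <= be) by apply Rmin_r.
  specialize (Hmon _ _ H). lra.
Qed.

Lemma S_lin4 : forall F a b k1 k2 k3 k4 f1 f2 f3 f4 N,
  stieltjes_sum F a b (fun t => k1 * f1 t + k2 * f2 t + k3 * f3 t + k4 * f4 t) N =
  k1 * stieltjes_sum F a b f1 N + k2 * stieltjes_sum F a b f2 N
  + k3 * stieltjes_sum F a b f3 N + k4 * stieltjes_sum F a b f4 N.
Proof.
  intros. rewrite (S_plus F a b (fun t => k1 * f1 t + k2 * f2 t + k3 * f3 t) (fun t => k4 * f4 t)).
  rewrite (S_plus F a b (fun t => k1 * f1 t + k2 * f2 t) (fun t => k3 * f3 t)).
  rewrite (S_plus F a b (fun t => k1 * f1 t) (fun t => k2 * f2 t)).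
  rewrite !S_scal. reflexivity.
Qed.

Lemma div_nonneg : forall x y, 0 <= x -> 0 < y -> 0 <= x / y.
Proof. intros; unfold Rdiv; apply Rmult_le_pos; auto; left; apply Rinv_0_lt_compat; auto. Qed.

Lemma amgm : forall y l, 0 < l -> y <= l / 2 + / (2 * l) * (y * y).
Proof.
  intros y l Hl.
  assert (E : l / 2 + / (2 * l) * (y * y) - y = ((y - l) * (y - l)) / (2 * l)) by (field; lra).
  assert (0 <= ((y - l) * (y - l)) / (2 * l)).
  { apply div_nonneg; [apply Rle_0_sqr|lra]. }
  lra.
Qed.

Lemma pointwise : forall K t x0 d lam mu, 0 < d -> 0 < lam -> 0 < mu ->
  K <= lam / 2 * chi (x0 - d) (x0 + d) t + / (2 * lam) * (K * K) + mu / (2 * d) * 1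
       + / (2 * mu * d) * (((t - x0) * K) * ((t - x0) * K)).
Proof.
  intros K t x0 d lam mu Hd Hl Hm.
  assert (P1 : 0 <= / (2 * lam) * (K * K)).
  { apply Rmult_le_pos; [left; apply Rinv_0_lt_compat; lra| apply Rle_0_sqr]. }
  assert (P2 : 0 <= / (2 * mu * d) * (((t - x0) * K) * ((t - x0) * K))).
  { apply Rmult_le_pos; [left; apply Rinv_0_lt_compat; apply Rmult_lt_0_compat; lra| apply Rle_0_sqr]. }
  assert (P3 : 0 <= mu / (2 * d) * 1).
  { rewrite Rmult_1_r; apply div_nonneg; lra. }
  unfold chi. destruct (Rlt_dec (x0 - d) t); [destruct (Rle_dec t (x0 + d))|].
  - pose proof (amgm K lam Hl). lra.
  - set (y := (t - x0) * K).
    assert (H1 : d * K <= Rabs y).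
    { unfold y; rewrite Rabs_mult. assert (d <= Rabs (t - x0)) by (unfold Rabs; destruct Rcase_abs; lra).
      assert (K <= Rabs K) by apply RRle_abs. pose proof (Rabs_pos K). nra. }
    assert (H2 : Rabs y <= mu / 2 + / (2 * mu) * (Rabs y * Rabs y)) by (apply amgm; auto).
    rewrite <- Rabs_mult in H2. assert (Rabs (y*y) = y * y) by (apply Rabs_right; nra).
    rewrite H in H2.
    assert (K <= (mu / 2 + / (2 * mu) * (y * y)) / d).
    { apply Rmult_le_reg_l with d; auto. replace (d * ((mu / 2 + / (2 * mu) * (y * y)) / d))
        with (mu / 2 + / (2 * mu) * (y * y)) by (field; lra). lra. }
    replace ((mu / 2 + / (2 * mu) * (y * y)) / d) with (mu / (2 * d) * 1 + / (2 * mu * d) * (y * y)) in H0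
      by (field; lra).
    lra.
  - set (y := (t - x0) * K).
    assert (H1 : d * K <= Rabs y).
    { unfold y; rewrite Rabs_mult. assert (d <= Rabs (t - x0)) by (unfold Rabs; destruct Rcase_abs; lra).
      assert (K <= Rabs K) by apply RRle_abs. pose proof (Rabs_pos K). nra. }
    assert (H2 : Rabs y <= mu / 2 + / (2 * mu) * (Rabs y * Rabs y)) by (apply amgm; auto).
    rewrite <- Rabs_mult in H2. assert (Rabs (y*y) = y * y) by (apply Rabs_right; nra).
    rewrite H in H2.
    assert (K <= (mu / 2 + / (2 * mu) * (y * y)) / d).
    { apply Rmult_le_reg_l with d; auto. replace (d * ((mu / 2 + / (2 * mu) * (y * y)) / d))
        with (mu / 2 + / (2 * mu) * (y * y)) by (field; lra). lra. }
    replace ((mu / 2 + / (2 * mu) * (y * y)) / d) with (mu / (2 * d) * 1 + / (2 * mu * d) * (y * y)) in H0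
      by (field; lra).
    lra.
Qed.

Lemma mass : forall F a b c ja jb x0 Kb,
  compact_prob_distr F a b -> orthonormal_polys F a b c -> jacobi_params c ja jb -> 0 < Kb ->
  (forall n, CD_kernel c n x0 x0 <= Kb) ->
  (forall eta, 0 < eta -> exists n, ja (S n) ^ 2 * (poly_eval c n x0 ^ 2 + poly_eval c (S n) x0 ^ 2) <= eta) ->
  forall d, 0 < d -> 1 / (2 * Kb) <= F (x0 + d) - F (x0 - 2 * d).
Proof.
  intros F a b c ja jb x0 Kb Hrho Hp Hjac HKb HK Hdec d Hd.
  destruct (Hdec (d * d / 16)) as [n Hn]. { apply Rdiv_lt_0_compat; nra. }
  set (En := ja (S n) ^ 2 * (poly_eval c n x0 ^ 2 + poly_eval c (S n) x0 ^ 2)) in *.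
  set (Kn := CD_kernel c n x0 x0).
  set (lam := 2 * Kb). set (mu := d / 4).
  set (m := F (x0 + d) - F (x0 - 2 * d)).
  set (K := fun t => CD_kernel c n t x0).
  set (W := fun t => ((t - x0) * K t) * ((t - x0) * K t)).
  pose proof Hrho as [Hab [Hmon _]].
  destruct (INR_archimed d (b - a) Hd) as [N0 HN0].
  set (N1 := max N0 1).
  set (v := fun N => ((lam / 2 * m + / (2 * lam) * stieltjes_sum F a b (fun t => K t * K t) N)
                     + mu / (2 * d) * 1) + / (2 * mu * d) * stieltjes_sum F a b W N).
  assert (Hv : Un_cv v (((lam / 2 * m + / (2 * lam) * Kn) + mu / (2 * d) * 1) + / (2 * mu * d) * En)).
  { unfold v. apply CV_plus; [apply CV_plus; [apply CV_plus|]|].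
    - apply cv_const.
    - apply cv_scal. apply (IK2 F a b c Hp).
    - apply cv_const.
    - apply cv_scal. apply (IK3 F a b c ja jb Hp Hjac). }
  assert (Hle : forall N, (N >= N1)%nat -> stieltjes_sum F a b K N <= v N).
  { intros N HN.
    assert (HNpos : 0 < INR N) by (apply lt_0_INR; unfold N1 in HN; lia).
    assert (Hh : (b - a) / INR N <= d).
    { apply Rmult_le_reg_r with (INR N); auto. unfold Rdiv; rewrite Rmult_assoc, Rinv_l by lra.
      assert (INR N0 <= INR N) by (apply le_INR; unfold N1 in HN; lia). nra. }
    eapply Rle_trans.
    { apply (S_le F a b Hrho K (fun t => lam / 2 * chi (x0 - d) (x0 + d) t + / (2 * lam) * (K t * K t)
         + mu / (2 * d) * 1 + / (2 * mu * d) * W t)).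
      intros t _. unfold W. apply pointwise; unfold lam, mu; lra. }
    rewrite (S_lin4 F a b _ _ _ _ (chi (x0 - d) (x0 + d)) (fun t => K t * K t) (fun _ => 1) W).
    unfold v.
    assert (Hw := window F a b (x0 - d) (x0 + d) N Hrho ltac:(lra) ltac:(unfold N1 in HN; lia)).
    assert (Hm2 : F (x0 - 2 * d) <= F (x0 - d - (b - a) / INR N)) by (apply Hmon; lra).
    assert (H1 := S_one F a b Hrho N).
    assert (lam / 2 * stieltjes_sum F a b (chi (x0 - d) (x0 + d)) N <= lam / 2 * m).
    { apply Rmult_le_compat_l; unfold lam, m; lra. }
    assert (mu / (2 * d) * stieltjes_sum F a b (fun _ => 1) N <= mu / (2 * d) * 1).
    { apply Rmult_le_compat_l; [apply div_nonneg; unfold mu; lra|lra]. }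
    lra. }
  assert (Hlim := cv_le_ev _ _ _ _ N1 Hle (IK1 F a b c Hp n x0) Hv).
  assert (T1 : / (2 * lam) * Kn <= 1 / 4).
  { unfold lam. apply Rmult_le_reg_l with (4 * Kb); [lra|].
    replace (4 * Kb * (/ (2 * (2 * Kb)) * Kn)) with Kn by (field; lra). unfold Kn; specialize (HK n); lra. }
  assert (T2 : mu / (2 * d) * 1 = 1 / 8) by (unfold mu; field; lra).
  assert (T3 : / (2 * mu * d) * En <= 1 / 8).
  { unfold mu. apply Rmult_le_reg_l with (d * d / 2); [nra|].
    replace (d * d / 2 * (/ (2 * (d / 4) * d) * En)) with En by (field; lra). lra. }
  assert (T4 : lam / 2 * m = Kb * m) by (unfold lam; field).
  assert (Kb * m >= 1 / 2) by lra.
  apply Rmult_le_reg_l with (2 * Kb); [lra|]. unfold lam in *.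
  replace (2 * Kb * (1 / (2 * Kb))) with 1 by (field; lra). lra.
Qed.

Lemma pp_of_mass : forall F a b x0 c0, compact_prob_distr F a b -> 0 < c0 ->
  (forall d, 0 < d -> c0 <= F (x0 + d) - F (x0 - 2 * d)) -> pure_point F x0.
Proof.
  intros F a b x0 c0 [_ [Hmon [Hrc _]]] Hc H.
  exists (c0 / 2); split; [lra|]. intros x Hx.
  destruct (Hrc x0 (c0 / 2) ltac:(lra)) as [d1 [Hd1 Hd1']].
  set (d := Rmin (d1 / 2) ((x0 - x) / 2)).
  assert (Hd : 0 < d) by (unfold d, Rmin; destruct Rle_dec; lra).
  assert (Hd2 : d <= d1 / 2) by apply Rmin_l.
  assert (Hd3 : d <= (x0 - x) / 2) by apply Rmin_r.
  specialize (Hd1' (x0 + d) ltac:(lra)). specialize (H d Hd).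
  assert (F x <= F (x0 - 2 * d)) by (apply Hmon; lra).
  apply Rabs_def2 in Hd1'. lra.
Qed.


Lemma div_nonneg' : forall x y, 0 <= x -> 0 < y -> 0 <= x / y.
Proof. intros; unfold Rdiv; apply Rmult_le_pos; auto; left; apply Rinv_0_lt_compat; auto. Qed.

Lemma cs2 : forall a b x y, (a * x + b * y) ^ 2 <= (a ^ 2 + b ^ 2) * (x ^ 2 + y ^ 2).
Proof. intros. assert (0 <= (a * y - b * x) ^ 2) by (apply pow2_ge_0). nra. Qed.

Lemma rstep : forall f1 f2 g1 g2 a11 a12 a21 a22,
  f1 * g2 - f2 * g1 = 1 -> 0 < g1 ^ 2 + g2 ^ 2 ->
  0 < (a11 * g1 + a12 * g2) ^ 2 + (a21 * g1 + a22 * g2) ^ 2 ->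
  Rabs (((a11 * f1 + a12 * f2) * (a11 * g1 + a12 * g2) + (a21 * f1 + a22 * f2) * (a21 * g1 + a22 * g2))
          / ((a11 * g1 + a12 * g2) ^ 2 + (a21 * g1 + a22 * g2) ^ 2)
        - (f1 * g1 + f2 * g2) / (g1 ^ 2 + g2 ^ 2))
  <= (a11 ^ 2 + a12 ^ 2 + a21 ^ 2 + a22 ^ 2) / ((a11 * g1 + a12 * g2) ^ 2 + (a21 * g1 + a22 * g2) ^ 2).
Proof.
  intros f1 f2 g1 g2 a11 a12 a21 a22 Hdet HG HG'.
  assert (E1 : f1 = (f1 * g1 + f2 * g2) / (g1 ^ 2 + g2 ^ 2) * g1 + g2 / (g1 ^ 2 + g2 ^ 2)).
  { apply Rmult_eq_reg_r with (g1 ^ 2 + g2 ^ 2); [|lra].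
    field_simplify; try lra. replace g2 with (g2 * (f1 * g2 - f2 * g1)) at 3 by (rewrite Hdet; ring). ring. }
  assert (E2 : f2 = (f1 * g1 + f2 * g2) / (g1 ^ 2 + g2 ^ 2) * g2 - g1 / (g1 ^ 2 + g2 ^ 2)).
  { apply Rmult_eq_reg_r with (g1 ^ 2 + g2 ^ 2); [|lra].
    field_simplify; try lra. replace g1 with (g1 * (f1 * g2 - f2 * g1)) at 3 by (rewrite Hdet; ring). ring. }
  set (G := g1 ^ 2 + g2 ^ 2) in *.
  set (h1 := a11 * g1 + a12 * g2) in *. set (h2 := a21 * g1 + a22 * g2) in *.
  set (G' := h1 ^ 2 + h2 ^ 2) in *.
  set (u1 := a11 * g2 - a12 * g1). set (u2 := a21 * g2 - a22 * g1).
  set (r := (f1 * g1 + f2 * g2) / G) in *.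
  assert (ID : ((a11 * f1 + a12 * f2) * h1 + (a21 * f1 + a22 * f2) * h2) / G' - r
     = (u1 * h1 + u2 * h2) / (G * G')).
  { rewrite E1, E2. unfold u1, u2, G', h1, h2. field. split; apply Rgt_not_eq; assumption. }
  rewrite ID. clear ID E1 E2.
  assert (B1 : u1 ^ 2 + u2 ^ 2 <= (a11 ^ 2 + a12 ^ 2 + a21 ^ 2 + a22 ^ 2) * G).
  { unfold u1, u2, G. pose proof (cs2 a11 (-a12) g2 g1). pose proof (cs2 a21 (-a22) g2 g1). nra. }
  assert (B2 : h1 ^ 2 + h2 ^ 2 <= (a11 ^ 2 + a12 ^ 2 + a21 ^ 2 + a22 ^ 2) * G).
  { unfold h1, h2, G. pose proof (cs2 a11 a12 g1 g2). pose proof (cs2 a21 a22 g1 g2). nra. }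
  assert (B3 : 2 * Rabs (u1 * h1 + u2 * h2) <= u1 ^ 2 + u2 ^ 2 + h1 ^ 2 + h2 ^ 2).
  { pose proof (pow2_ge_0 (u1 - h1)); pose proof (pow2_ge_0 (u2 - h2)); pose proof (pow2_ge_0 (u1 + h1)); pose proof (pow2_ge_0 (u2 + h2)); unfold Rabs; destruct Rcase_abs; nra. }
  unfold Rdiv at 1. rewrite Rabs_mult, Rabs_inv.
  rewrite (Rabs_right (G * G')) by (left; apply Rmult_lt_0_compat; auto).
  apply Rmult_le_reg_r with (G * G'); [apply Rmult_lt_0_compat; auto|].
  unfold Rdiv. rewrite Rmult_assoc, Rinv_l by (apply Rgt_not_eq, Rmult_lt_0_compat; auto).
  replace ((a11 ^ 2 + a12 ^ 2 + a21 ^ 2 + a22 ^ 2) * / G' * (G * G'))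
    with ((a11 ^ 2 + a12 ^ 2 + a21 ^ 2 + a22 ^ 2) * G) by (field; lra).
  lra.
Qed.

Lemma lagrange : forall f1 f2 g1 g2, f1 * g2 - f2 * g1 = 1 -> 0 < g1 ^ 2 + g2 ^ 2 ->
  f1 ^ 2 + f2 ^ 2 = ((f1 * g1 + f2 * g2) / (g1 ^ 2 + g2 ^ 2)) ^ 2 * (g1 ^ 2 + g2 ^ 2) + / (g1 ^ 2 + g2 ^ 2).
Proof.
  intros f1 f2 g1 g2 H HG.
  replace (((f1 * g1 + f2 * g2) / (g1 ^ 2 + g2 ^ 2)) ^ 2 * (g1 ^ 2 + g2 ^ 2) + / (g1 ^ 2 + g2 ^ 2))
    with (((f1 * g1 + f2 * g2) ^ 2 + (f1 * g2 - f2 * g1) ^ 2) / (g1 ^ 2 + g2 ^ 2))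
    by (rewrite H; field; lra).
  field; lra.
Qed.

Lemma tail : forall (r : nat -> R) K q N, 0 < q < 1 -> 0 <= K ->
  (forall n, (n >= N)%nat -> Rabs (r (S n) - r n) <= K * q ^ n) ->
  (forall eps, 0 < eps -> exists M, forall m, (m >= M)%nat -> Rabs (r m) <= eps) ->
  forall n, (n >= N)%nat -> Rabs (r n) <= K * q ^ n / (1 - q).
Proof.
  intros r K q N Hq HK Hs Hcv n Hn.
  assert (Hk : forall k, Rabs (r n - r (n + k)%nat) <= K * q ^ n * (1 - q ^ k) / (1 - q)).
  { induction k.
    - rewrite Nat.add_0_r, Rminus_diag, Rabs_R0. simpl. replace (1 - 1) with 0 by ring.
      unfold Rdiv; rewrite Rmult_0_r, Rmult_0_l; lra.
    - rewrite Nat.add_succ_r.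
      specialize (Hs (n + k)%nat ltac:(lia)). rewrite pow_add in Hs.
      replace (r n - r (S (n + k))) with ((r n - r (n + k)%nat) - (r (S (n + k)) - r (n + k)%nat)) by ring.
      eapply Rle_trans; [apply Rabs_triang|]. rewrite Rabs_Ropp.
      replace (K * q ^ n * (1 - q ^ S k) / (1 - q)) with (K * q ^ n * (1 - q ^ k) / (1 - q) + K * (q ^ n * q ^ k))
        by (simpl; field; lra).
      lra. }
  apply Rle_plus_epsilon. intros eps He.
  destruct (Hcv eps He) as [M HM].
  specialize (Hk M). specialize (HM (n + M)%nat ltac:(lia)).
  replace (r n) with ((r n - r (n + M)%nat) + r (n + M)%nat) by ring.
  eapply Rle_trans; [apply Rabs_triang|].
  assert (K * q ^ n * (1 - q ^ M) / (1 - q) <= K * q ^ n / (1 - q)).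
  { unfold Rdiv. apply Rmult_le_compat_r; [left; apply Rinv_0_lt_compat; lra|].
    assert (0 < q ^ M) by (apply pow_lt; lra). assert (0 <= K * q ^ n) by (apply Rmult_le_pos; [auto|left; apply pow_lt; lra]).
    nra. }
  lra.
Qed.

Lemma powcomm : forall P n k, (P ^ k) ^ n = (P ^ n) ^ k.
Proof. intros. rewrite <- !pow_mult, Nat.mul_comm. reflexivity. Qed.

Lemma dyn : forall (f1 f2 g1 g2 A11 A12 A21 A22 : nat -> R) B2 P C1 N,
  (forall n, f1 n * g2 n - f2 n * g1 n = 1) ->
  (forall n, f1 (S n) = A11 (S n) * f1 n + A12 (S n) * f2 n) ->
  (forall n, f2 (S n) = A21 (S n) * f1 n + A22 (S n) * f2 n) ->
  (forall n, g1 (S n) = A11 (S n) * g1 n + A12 (S n) * g2 n) ->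
  (forall n, g2 (S n) = A21 (S n) * g1 n + A22 (S n) * g2 n) ->
  (forall n, A11 (S n) ^ 2 + A12 (S n) ^ 2 + A21 (S n) ^ 2 + A22 (S n) ^ 2 <= B2) ->
  1 < P ->
  (forall n, (n >= N)%nat -> (P ^ n) ^ 3 / 2 <= g1 n ^ 2 + g2 n ^ 2 /\
      g1 n ^ 2 + g2 n ^ 2 <= (P ^ n) ^ 5 /\ f1 n ^ 2 + f2 n ^ 2 <= C1 * (P ^ n) ^ 2) ->
  exists D, forall n, (n >= N)%nat -> f1 n ^ 2 + f2 n ^ 2 <= D / P ^ n.
Proof.
  intros f1 f2 g1 g2 A11 A12 A21 A22 B2 P C1 N Hdet Hf1 Hf2 Hg1 Hg2 HB HP Hbd.
  set (G := fun n => g1 n ^ 2 + g2 n ^ 2).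
  set (r := fun n => (f1 n * g1 n + f2 n * g2 n) / G n).
  assert (HX : forall n, 1 <= P ^ n) by (intros; apply pow_R1_Rle; lra).
  assert (HGp : forall n, (n >= N)%nat -> 0 < G n).
  { intros n Hn. destruct (Hbd n Hn) as [H1 _]. unfold G. specialize (HX n).
    assert (1 <= (P ^ n) ^ 3) by (apply pow_R1_Rle; lra). lra. }
  assert (HB0 : 0 <= B2).
  { specialize (HB 0%nat). pose proof (pow2_ge_0 (A11 1%nat)). pose proof (pow2_ge_0 (A12 1%nat)).
    pose proof (pow2_ge_0 (A21 1%nat)). pose proof (pow2_ge_0 (A22 1%nat)). lra. }
  assert (HC0 : 0 <= C1).
  { destruct (Hbd N (le_n _)) as [_ [_ H]]. pose proof (pow2_ge_0 (f1 N)). pose proof (pow2_ge_0 (f2 N)).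
    assert (0 < (P ^ N) ^ 2) by (apply pow_lt; specialize (HX N); lra). nra. }
  assert (Hstep : forall n, (n >= N)%nat -> Rabs (r (S n) - r n) <= (2 * B2) * (/ P ^ 3) ^ n).
  { intros n Hn.
    assert (R1 := rstep (f1 n) (f2 n) (g1 n) (g2 n) (A11 (S n)) (A12 (S n)) (A21 (S n)) (A22 (S n))
      (Hdet n) (HGp n Hn)).
    rewrite <- Hg1, <- Hg2, <- Hf1, <- Hf2 in R1.
    specialize (R1 (HGp (S n) ltac:(lia))). fold (G (S n)) (G n) in R1. fold (r (S n)) (r n) in R1.
    eapply Rle_trans; [exact R1|].
    destruct (Hbd (S n) ltac:(lia)) as [H1 _].
    rewrite pow_inv, powcomm.
    assert (0 < (P ^ n) ^ 3) by (apply pow_lt; specialize (HX n); lra).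
    assert ((P ^ n) ^ 3 <= (P ^ S n) ^ 3).
    { apply pow_incr; split; [specialize (HX n); lra|]. apply Rle_pow; [lra|lia]. }
    specialize (HB n). specialize (HGp (S n) ltac:(lia)).
    apply Rle_trans with (B2 / ((P ^ n) ^ 3 / 2)).
    - unfold Rdiv. apply Rmult_le_compat; try lra.
      + apply Rplus_le_le_0_compat; [|apply pow2_ge_0]. repeat apply Rplus_le_le_0_compat; apply pow2_ge_0.
      + left; apply Rinv_0_lt_compat; auto.
      + apply Rinv_le_contravar; [lra|]. unfold G; lra.
    - right; field. specialize (HX n); lra. }
  assert (Hrm : forall m, (m >= N)%nat -> r m ^ 2 <= 2 * C1 * (/ P) ^ m).
  { intros m Hm. destruct (Hbd m Hm) as [H1 [H2 H3]].
    assert (L := lagrange _ _ _ _ (Hdet m) (HGp m Hm)). fold (G m) in L. fold (r m) in L.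
    specialize (HGp m Hm).
    assert (r m ^ 2 * G m <= C1 * (P ^ m) ^ 2).
    { assert (0 < / G m) by (apply Rinv_0_lt_compat; auto). lra. }
    rewrite pow_inv. specialize (HX m).
    apply Rmult_le_reg_r with (G m); auto.
    apply Rle_trans with (C1 * (P ^ m) ^ 2); auto.
    apply Rle_trans with (2 * C1 * / P ^ m * ((P ^ m) ^ 3 / 2)).
    - right. field. lra.
    - apply Rmult_le_compat_l; [|unfold G; lra]. apply Rmult_le_pos; [lra|left; apply Rinv_0_lt_compat; lra]. }
  assert (Hcv : forall eps, 0 < eps -> exists M, forall m, (m >= M)%nat -> Rabs (r m) <= eps).
  { intros eps He.
    assert (HPi : 0 < / P < 1).
    { split; [apply Rinv_0_lt_compat; lra|]. rewrite <- Rinv_1. apply Rinv_lt_contravar; lra. }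
    destruct (pow_lt_1_zero (/ P) ltac:(rewrite Rabs_right; lra)
       (eps * eps / (2 * C1 + 1)) ltac:(apply Rdiv_lt_0_compat; nra)) as [M HM].
    exists (max M N). intros m Hm. specialize (HM m ltac:(lia)). specialize (Hrm m ltac:(lia)).
    rewrite Rabs_right in HM by (left; apply pow_lt, Rinv_0_lt_compat; lra).
    assert (0 <= (/ P) ^ m) by (left; apply pow_lt, Rinv_0_lt_compat; lra).
    assert (2 * C1 * (/ P) ^ m <= eps * eps).
    { apply Rle_trans with ((2 * C1 + 1) * (/ P) ^ m); [nra|].
      apply Rmult_le_reg_r with (/ (2 * C1 + 1)); [apply Rinv_0_lt_compat; lra|].
      replace ((2 * C1 + 1) * (/ P) ^ m * / (2 * C1 + 1)) with ((/ P) ^ m) by (field; lra).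
      unfold Rdiv in HM. lra. }
    rewrite <- (Rabs_right eps) by lra. apply Rsqr_le_abs_0. unfold Rsqr. simpl in Hrm. lra. }
  assert (Hq : 0 < / P ^ 3 < 1).
  { assert (1 < P ^ 3) by (simpl; nra). split; [apply Rinv_0_lt_compat; lra|].
    rewrite <- Rinv_1. apply Rinv_lt_contravar; lra. }
  assert (Ht := tail r (2 * B2) (/ P ^ 3) N Hq ltac:(lra) Hstep Hcv).
  set (K' := 2 * B2 / (1 - / P ^ 3)).
  assert (HK' : 0 <= K') by (unfold K'; apply div_nonneg'; lra).
  exists (K' ^ 2 + 2). intros n Hn.
  specialize (Ht n Hn). rewrite pow_inv, powcomm in Ht.
  destruct (Hbd n Hn) as [H1 [H2 H3]].
  assert (L := lagrange _ _ _ _ (Hdet n) (HGp n Hn)). fold (G n) in L. fold (r n) in L.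
  rewrite L. specialize (HGp n Hn). specialize (HX n).
  set (X := P ^ n) in *.
  assert (Hr : Rabs (r n) <= K' / X ^ 3).
  { eapply Rle_trans; [exact Ht|]. right. unfold K'. field. split; [lra|]. split; [|simpl; nra].
    assert (1 < P ^ 3) by (simpl; nra). apply Rminus_eq_contra. intro E.
    assert (/ P ^ 3 < 1) by lra. lra. }
  assert (HX3 : 1 <= X ^ 3) by (apply pow_R1_Rle; lra).
  assert (Hr2 : r n ^ 2 <= (K' / X ^ 3) ^ 2).
  { rewrite <- (pow2_abs (r n)). apply pow_incr; split; [apply Rabs_pos|auto]. }
  assert (E1 : (K' / X ^ 3) ^ 2 * X ^ 5 = K' ^ 2 / X) by (field; lra).
  assert (A1 : r n ^ 2 * G n <= K' ^ 2 / X).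
  { rewrite <- E1. apply Rmult_le_compat; [apply pow2_ge_0|lra|auto|unfold G; lra]. }
  assert (A2 : / G n <= 2 / X).
  { apply Rle_trans with (/ (X ^ 3 / 2)).
    - apply Rinv_le_contravar; [lra|unfold G; lra].
    - replace (/ (X ^ 3 / 2)) with (2 / X ^ 3) by (field; lra).
      unfold Rdiv. apply Rmult_le_compat_l; [lra|]. apply Rinv_le_contravar; [lra|].
      replace (X ^ 3) with (X * X * X) by ring. nra. }
  replace ((K' ^ 2 + 2) / X) with (K' ^ 2 / X + 2 / X) by (field; lra). lra.
Qed.


Section T.
Variables (F : R -> R) (a b : R) (c : nat -> nat -> R) (ja jb : nat -> R) (x0 : R).
Hypothesis Hp : orthonormal_polys F a b c.
Hypothesis Hjac : jacobi_params c ja jb.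
Notation p := (poly_eval c).
Notation T := (fun n => transfer ja jb n x0).

Lemma transfer_entries : forall n, m11 (T n) = p n x0 /\
  m21 (T n) = match n with O => 0 | S k => ja n * p k x0 end.
Proof.
  destruct Hjac as [Hpos _].
  induction n.
  - simpl. rewrite (p0 F a b c Hp). auto.
  - destruct IHn as [H1 H2]. simpl transfer. simpl m11. simpl m21. rewrite H1, H2.
    assert (Ha : 0 < ja (S n)) by (apply Hpos; lia).
    pose proof (rec c ja jb Hjac n x0) as Hr.
    split.
    + apply Rmult_eq_reg_l with (ja (S n)); [|lra].
      replace (ja (S n) * ((x0 - jb (S n)) / ja (S n) * p n x0 + - 1 / ja (S n) * (match n with O => 0 | S k => ja n * p k x0 end)))
        with ((x0 - jb (S n)) * p n x0 - (match n with O => 0 | S k => ja n * p k x0 end)) by (field; lra).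
      lra.
    + field. lra.
Qed.

Lemma transfer_det : forall n, m11 (T n) * m22 (T n) - m12 (T n) * m21 (T n) = 1.
Proof.
  destruct Hjac as [Hpos _].
  induction n.
  - simpl. ring.
  - simpl transfer. assert (Ha : 0 < ja (S n)) by (apply Hpos; lia).
    revert IHn. generalize (transfer ja jb n x0). intros [t11 t12 t21 t22] IH. simpl in *.
    transitivity ((((x0 - jb (S n)) / ja (S n)) * 0 - (-1 / ja (S n)) * (ja (S n) * ja (S n) / ja (S n))) *
       (t11 * t22 - t12 * t21)); [field; lra|]. rewrite IH. field; lra.
Qed.
End T.

Lemma opnorm_facts : forall M r, opnorm_is M r ->
  m11 M ^ 2 + m21 M ^ 2 <= r ^ 2 /\ m12 M ^ 2 + m22 M ^ 2 <= r ^ 2 /\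
  r ^ 2 <= m11 M ^ 2 + m12 M ^ 2 + m21 M ^ 2 + m22 M ^ 2 /\ 0 <= r.
Proof.
  intros [a11 a12 a21 a22] r [Hub Hl]. cbn [m11 m12 m21 m22] in *.
  assert (E1 := Hub (sqrt ((a11 * 1 + a12 * 0) ^ 2 + (a21 * 1 + a22 * 0) ^ 2))
     ltac:(exists 1, 0; split; [ring|reflexivity])).
  assert (E2 := Hub (sqrt ((a11 * 0 + a12 * 1) ^ 2 + (a21 * 0 + a22 * 1) ^ 2))
     ltac:(exists 0, 1; split; [ring|reflexivity])).
  assert (Hr0 : 0 <= r).
  { eapply Rle_trans; [apply sqrt_pos|exact E1]. }
  assert (Hup : r <= sqrt (a11 ^ 2 + a12 ^ 2 + a21 ^ 2 + a22 ^ 2)).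
  { apply Hl. intros t [v1 [v2 [Hv ->]]]. apply sqrt_le_1_alt.
    pose proof (cs2 a11 a12 v1 v2). pose proof (cs2 a21 a22 v1 v2). rewrite Hv in *. lra. }
  assert (Q : forall x, 0 <= x -> sqrt x <= r -> x <= r ^ 2).
  { intros x Hx H. apply Rle_trans with (sqrt x * sqrt x); [rewrite sqrt_sqrt; lra|].
    replace (r ^ 2) with (r * r) by ring.
    apply Rmult_le_compat; auto using sqrt_pos. }
  split; [|split; [|split]]; auto.
  - replace (a11 ^ 2 + a21 ^ 2) with ((a11 * 1 + a12 * 0) ^ 2 + (a21 * 1 + a22 * 0) ^ 2) by ring.
    apply Q; [|exact E1]. pose proof (pow2_ge_0 (a11 * 1 + a12 * 0)); pose proof (pow2_ge_0 (a21 * 1 + a22 * 0)). lra.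
  - replace (a12 ^ 2 + a22 ^ 2) with ((a11 * 0 + a12 * 1) ^ 2 + (a21 * 0 + a22 * 1) ^ 2) by ring.
    apply Q; [|exact E2]. pose proof (pow2_ge_0 (a11 * 0 + a12 * 1)); pose proof (pow2_ge_0 (a21 * 0 + a22 * 1)). lra.
  - assert (0 <= a11 ^ 2 + a12 ^ 2 + a21 ^ 2 + a22 ^ 2) by
      (pose proof (pow2_ge_0 a11); pose proof (pow2_ge_0 a12); pose proof (pow2_ge_0 a21); pose proof (pow2_ge_0 a22); lra).
    apply Rle_trans with (sqrt (a11 ^ 2 + a12 ^ 2 + a21 ^ 2 + a22 ^ 2) * sqrt (a11 ^ 2 + a12 ^ 2 + a21 ^ 2 + a22 ^ 2));
      [|rewrite sqrt_sqrt; lra].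
    replace (r ^ 2) with (r * r) by ring.
    apply Rmult_le_compat; auto.
Qed.

Lemma expn : forall x n, exp (x * INR n) = exp x ^ n.
Proof.
  intros x n; induction n.
  - simpl. rewrite Rmult_0_r, exp_0. reflexivity.
  - rewrite S_INR, Rmult_plus_distr_l, exp_plus, IHn, Rmult_1_r. simpl. ring.
Qed.

Lemma frobA : forall a0 b0 x0 m M Rb, 0 < m -> m <= a0 <= M -> Rabs b0 <= Rb ->
  ((x0 - b0) / a0) ^ 2 + (- 1 / a0) ^ 2 + (a0 ^ 2 / a0) ^ 2 + 0 ^ 2 <=
  ((Rabs x0 + Rb) ^ 2 + 1) / m ^ 2 + M ^ 2.
Proof.
  intros a0 b0 x0 m M Rb Hm Ha Hb.
  replace (((x0 - b0) / a0) ^ 2 + (- 1 / a0) ^ 2 + (a0 ^ 2 / a0) ^ 2 + 0 ^ 2)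
    with (((x0 - b0) ^ 2 + 1) / a0 ^ 2 + a0 ^ 2) by (field; lra).
  assert (H1 : (x0 - b0) ^ 2 <= (Rabs x0 + Rb) ^ 2).
  { rewrite <- (pow2_abs (x0 - b0)). apply pow_incr. split; [apply Rabs_pos|].
    unfold Rminus. eapply Rle_trans; [apply Rabs_triang|]. rewrite Rabs_Ropp. lra. }
  assert (H2 : a0 ^ 2 <= M ^ 2) by (apply pow_incr; lra).
  assert (H3 : m ^ 2 <= a0 ^ 2) by (apply pow_incr; lra).
  assert (0 < m ^ 2) by (apply pow_lt; lra).
  assert (((x0 - b0) ^ 2 + 1) / a0 ^ 2 <= ((Rabs x0 + Rb) ^ 2 + 1) / m ^ 2).
  { unfold Rdiv. apply Rmult_le_compat; try lra.
    - pose proof (pow2_ge_0 (x0 - b0)); lra.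
    - left; apply Rinv_0_lt_compat; lra.
    - apply Rinv_le_contravar; lra. }
  lra.
Qed.


Lemma exp_mono : forall x y, x <= y -> exp x <= exp y.
Proof. intros x y [H|H]; [left; apply exp_increasing; auto|subst; lra]. Qed.

Lemma big_pow : forall P b, 1 < P -> exists N, forall n, (n >= N)%nat -> b <= P ^ n.
Proof.
  intros P b HP. destruct (Pow_x_infinity P ltac:(rewrite Rabs_right; lra) b) as [N HN].
  exists N; intros n Hn. specialize (HN n Hn). rewrite Rabs_right in HN; [lra|].
  left; apply pow_lt; lra.
Qed.

Lemma main_impl : forall F a b c ja jb x0,
  compact_prob_distr F a b -> orthonormal_polys F a b c -> jacobi_params c ja jb ->
  (exists m M, 0 < m /\ forall n, (1 <= n)%nat -> m <= ja n <= M) ->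
  (exists g, 0 < g /\ lyapunov_exponent_is ja jb x0 g) ->
  Un_cv (fun n => poly_eval c n x0 ^ 2 / CD_kernel c n x0 x0) 0 ->
  pure_point F x0.
Proof.
  intros F a b c ja jb x0 Hrho Hp Hjac [m [M [Hm HmM]]] [g [Hg [nrm [Hnrm Hly]]]] Hcv.
  set (p := fun n => poly_eval c n x0).
  set (K := fun n => CD_kernel c n x0 x0).
  assert (KS : forall n, K (S n) = K n + p (S n) ^ 2).
  { intros n. unfold K, p.
    change (CD_kernel c (S n) x0 x0) with (CD_kernel c n x0 x0 + poly_eval c (S n) x0 * poly_eval c (S n) x0).
    ring. }
  assert (K0 : K 0%nat = 1).
  { unfold K, CD_kernel. simpl. rewrite (p0 F a b c Hp). ring. }
  assert (Kmono : forall n k, K n <= K (n + k)%nat).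
  { intros n k; induction k; [rewrite Nat.add_0_r; lra|].
    rewrite Nat.add_succ_r, KS. pose proof (pow2_ge_0 (p (S (n + k)))). lra. }
  assert (Kmono' : forall n n', (n <= n')%nat -> K n <= K n').
  { intros n n' H. replace n' with (n + (n' - n))%nat by lia. apply Kmono. }
  assert (Kge1 : forall n, 1 <= K n).
  { intros n. rewrite <- K0. apply Kmono'; lia. }
  assert (pK : forall n, p n ^ 2 <= K n).
  { intros [|n].
    - rewrite K0. unfold p. rewrite (p0 F a b c Hp). lra.
    - rewrite KS. pose proof (Kge1 n). lra. }
  set (f1 := fun n => m11 (transfer ja jb n x0)).
  set (f2 := fun n => m21 (transfer ja jb n x0)).
  set (g1 := fun n => m12 (transfer ja jb n x0)).
  set (g2 := fun n => m22 (transfer ja jb n x0)).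
  assert (Hf1 : forall n, f1 n = p n) by (intros; apply (transfer_entries F a b c ja jb x0 Hp Hjac n)).
  assert (Fbd : forall n, f1 n ^ 2 + f2 n ^ 2 <= (1 + M ^ 2) * K n).
  { intros n. rewrite Hf1. destruct (transfer_entries F a b c ja jb x0 Hp Hjac n) as [_ E].
    unfold f2. rewrite E. pose proof (pK n). pose proof (Kge1 n).
    assert (0 <= M ^ 2) by apply pow2_ge_0.
    destruct n.
    - assert (0 * M ^ 2 <= M ^ 2 * K 0%nat) by nra. simpl (0 ^ 2). lra.
    - assert (Ha := HmM (S n) ltac:(lia)).
      assert (E2 : (ja (S n) * poly_eval c n x0) ^ 2 = ja (S n) ^ 2 * p n ^ 2) by (unfold p; ring).
      rewrite E2.
      assert (ja (S n) ^ 2 <= M ^ 2) by (apply pow_incr; lra).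
      pose proof (pK n). pose proof (Kmono' n (S n) ltac:(lia)).
      assert (0 <= p n ^ 2) by apply pow2_ge_0.
      assert (ja (S n) ^ 2 * p n ^ 2 <= M ^ 2 * K (S n)).
      { apply Rmult_le_compat; auto; try lra. apply pow2_ge_0. }
      nra. }
  set (P := exp (g / 2)).
  assert (HP : 1 < P).
  { unfold P. rewrite <- exp_0. apply exp_increasing. lra. }
  assert (HP2 : 1 < P ^ 2) by (simpl; nra).
  destruct (Hcv (1 - / P ^ 2)) as [N0 HN0].
  { assert (/ P ^ 2 < 1). { rewrite <- Rinv_1. apply Rinv_lt_contravar; lra. } lra. }
  assert (Kstep : forall n, (n >= N0)%nat -> K (S n) <= P ^ 2 * K n).
  { intros n Hn. specialize (HN0 (S n) ltac:(lia)). unfold Rdist in HN0.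
    rewrite Rminus_0_r in HN0. fold (p (S n)) (K (S n)) in HN0.
    pose proof (Kge1 (S n)). pose proof (pow2_ge_0 (p (S n))).
    rewrite Rabs_right in HN0 by (apply Rle_ge, div_nonneg; lra).
    assert (p (S n) ^ 2 < (1 - / P ^ 2) * K (S n)).
    { apply Rmult_lt_reg_r with (/ K (S n)); [apply Rinv_0_lt_compat; lra|].
      replace ((1 - / P ^ 2) * K (S n) * / K (S n)) with (1 - / P ^ 2) by (field; lra). exact HN0. }
    rewrite KS in H1 |- *. 
    assert (/ P ^ 2 * K (S n) <= K n) by (rewrite KS; lra).
    apply Rmult_le_reg_l with (/ P ^ 2); [apply Rinv_0_lt_compat; lra|].
    rewrite <- KS. replace (/ P ^ 2 * (P ^ 2 * K n)) with (K n) by (field; lra). auto. }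
  assert (Kgrow : forall k, K (N0 + k)%nat <= K N0 * (P ^ 2) ^ k).
  { induction k. { rewrite Nat.add_0_r; simpl; lra. }
    rewrite Nat.add_succ_r. eapply Rle_trans; [apply Kstep; lia|].
    replace (K N0 * (P ^ 2) ^ S k) with (P ^ 2 * (K N0 * (P ^ 2) ^ k)) by (simpl; ring).
    apply Rmult_le_compat_l; lra. }
  set (C1 := (1 + M ^ 2) * (K N0 / (P ^ 2) ^ N0)).
  assert (HFC : forall n, (n >= N0)%nat -> f1 n ^ 2 + f2 n ^ 2 <= C1 * (P ^ n) ^ 2).
  { intros n Hn. eapply Rle_trans; [apply Fbd|]. unfold C1.
    replace n with (N0 + (n - N0))%nat by lia. rewrite <- (powcomm P (N0 + (n - N0)) 2), pow_add.
    assert (0 < (P ^ 2) ^ N0) by (apply pow_lt; lra).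
    replace ((1 + M ^ 2) * (K N0 / (P ^ 2) ^ N0) * ((P ^ 2) ^ N0 * (P ^ 2) ^ (n - N0)))
      with ((1 + M ^ 2) * (K N0 * (P ^ 2) ^ (n - N0))) by (field; lra).
    apply Rmult_le_compat_l; [pose proof (pow2_ge_0 M); lra|]. apply Kgrow. }
  assert (Hdet : forall n, f1 n * g2 n - f2 n * g1 n = 1) by (intros n; unfold f1, f2, g1, g2; rewrite <- (transfer_det c ja jb x0 Hjac n); ring).
  assert (HFG : forall n, 1 <= (f1 n ^ 2 + f2 n ^ 2) * (g1 n ^ 2 + g2 n ^ 2)).
  { intros n. pose proof (cs2 (f1 n) (f2 n) (g2 n) (- g1 n)) as H.
    assert (E : f1 n * g2 n + f2 n * - g1 n = 1).
    { replace (f2 n * - g1 n) with (- (f2 n * g1 n)) by ring. pose proof (Hdet n). lra. }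
    rewrite E in H. replace (g2 n ^ 2 + (- g1 n) ^ 2) with (g1 n ^ 2 + g2 n ^ 2) in H by ring.
    replace (1 ^ 2) with 1 in H by ring. exact H. }
  destruct (Hly (g / 4)) as [N1 HN1]; [lra|].
  assert (HLy : forall n, (n >= max N1 1)%nat ->
     (P ^ n) ^ 3 <= nrm n ^ 2 /\ nrm n ^ 2 <= (P ^ n) ^ 5).
  { intros n Hn. specialize (HN1 n ltac:(lia)). unfold Rdist in HN1. apply Rabs_def2 in HN1.
    destruct (opnorm_facts _ _ (Hnrm n)) as [O1 [O2 [O3 O4]]].
    fold (f1 n) (f2 n) (g1 n) (g2 n) in O1, O2, O3.
    pose proof (HFG n). pose proof (pow2_ge_0 (f1 n)). pose proof (pow2_ge_0 (f2 n)).
    assert (Hpos : 0 < nrm n).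
    { destruct O4 as [|E]; auto. rewrite <- E in O1. simpl in O1.
      assert (f1 n ^ 2 + f2 n ^ 2 = 0) by lra. rewrite H2 in H. lra. }
    assert (Hn0 : 0 < INR n) by (apply lt_0_INR; lia).
    assert (L1 : 3 * g / 4 * INR n <= ln (nrm n)).
    { apply Rmult_le_reg_r with (/ INR n); [apply Rinv_0_lt_compat; lra|].
      replace (3 * g / 4 * INR n * / INR n) with (3 * g / 4) by (field; lra). unfold Rdiv in HN1. lra. }
    assert (L2 : ln (nrm n) <= 5 * g / 4 * INR n).
    { apply Rmult_le_reg_r with (/ INR n); [apply Rinv_0_lt_compat; lra|].
      replace (5 * g / 4 * INR n * / INR n) with (5 * g / 4) by (field; lra). unfold Rdiv in HN1. lra. }
    assert (En : nrm n ^ 2 = exp (ln (nrm n) * INR 2)) by (rewrite expn, exp_ln; auto).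
    assert (E3 : (P ^ n) ^ 3 = exp (g / 2 * INR n * INR 3)) by (unfold P; rewrite !expn; reflexivity).
    assert (E5 : (P ^ n) ^ 5 = exp (g / 2 * INR n * INR 5)) by (unfold P; rewrite !expn; reflexivity).
    rewrite En, E3, E5. simpl INR.
    split; apply exp_mono; lra. }
  assert (HC1 : 0 <= C1).
  { unfold C1. apply Rmult_le_pos; [pose proof (pow2_ge_0 M); lra|].
    apply div_nonneg; [pose proof (Kge1 N0); lra| apply pow_lt; lra]. }
  destruct (big_pow P (2 * C1) HP) as [N2 HN2].
  set (Nb := max (max N0 (max N1 1)) N2).
  set (Rb := Rabs a + Rabs b).
  set (B2 := ((Rabs x0 + Rb) ^ 2 + 1) / m ^ 2 + M ^ 2).
  assert (Hbd : forall n, (n >= Nb)%nat -> (P ^ n) ^ 3 / 2 <= g1 n ^ 2 + g2 n ^ 2 /\ g1 n ^ 2 + g2 n ^ 2 <= (P ^ n) ^ 5 /\ f1 n ^ 2 + f2 n ^ 2 <= C1 * (P ^ n) ^ 2).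
  { intros n Hn. destruct (HLy n ltac:(unfold Nb in Hn; lia)) as [L1 L2].
    destruct (opnorm_facts _ _ (Hnrm n)) as [O1 [O2 [O3 O4]]].
    fold (f1 n) (f2 n) (g1 n) (g2 n) in O1, O2, O3.
    assert (HF := HFC n ltac:(unfold Nb in Hn; lia)).
    assert (HX := HN2 n ltac:(unfold Nb in Hn; lia)).
    assert (0 <= (P ^ n) ^ 2) by apply pow2_ge_0.
    assert (C1 * (P ^ n) ^ 2 <= (P ^ n) ^ 3 / 2).
    { replace ((P ^ n) ^ 3 / 2) with ((P ^ n) ^ 2 * (P ^ n / 2)) by (simpl; field).
      rewrite Rmult_comm. apply Rmult_le_compat_l; lra. }
    split; [|split]; lra. }
  assert (HB : forall n, m11 (A_mat ja jb (S n) x0) ^ 2 + m12 (A_mat ja jb (S n) x0) ^ 2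
       + m21 (A_mat ja jb (S n) x0) ^ 2 + m22 (A_mat ja jb (S n) x0) ^ 2 <= B2).
  { intros n. cbn [m11 m12 m21 m22 A_mat]. apply frobA; auto.
    apply HmM; lia. apply (b_bound F a b c ja jb Hrho Hp Hjac n). }
  destruct (dyn f1 f2 g1 g2 (fun j => m11 (A_mat ja jb j x0)) (fun j => m12 (A_mat ja jb j x0))
     (fun j => m21 (A_mat ja jb j x0)) (fun j => m22 (A_mat ja jb j x0)) B2 P C1 Nb
     Hdet ltac:(intros; reflexivity) ltac:(intros; reflexivity) ltac:(intros; reflexivity)
     ltac:(intros; reflexivity) HB HP Hbd) as [D HD].
  assert (HpD : forall n, (n >= Nb)%nat -> p n ^ 2 <= D / P ^ n).
  { intros n Hn. specialize (HD n Hn). rewrite Hf1 in HD. pose proof (pow2_ge_0 (f2 n)). lra. }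
  assert (HPn : forall n, 0 < P ^ n) by (intros; apply pow_lt; lra).
  assert (HD0 : 0 <= D).
  { specialize (HpD Nb (le_n _)). pose proof (pow2_ge_0 (p Nb)). specialize (HPn Nb).
    apply Rmult_le_reg_r with (/ P ^ Nb); [apply Rinv_0_lt_compat; lra|]. rewrite Rmult_0_l. exact (Rle_trans _ _ _ H HpD). }
  set (u := / P).
  assert (Hu : 0 < u < 1).
  { unfold u; split; [apply Rinv_0_lt_compat; lra|]. rewrite <- Rinv_1. apply Rinv_lt_contravar; lra. }
  assert (Hule1 : forall j, u ^ j <= 1).
  { induction j; simpl; [lra|]. pose proof (pow_lt u j ltac:(lra)). nra. }
  assert (HDu : forall n, D / P ^ n = D * u ^ n) by (intros; unfold u; rewrite pow_inv; reflexivity).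
  assert (Kbd : forall k, K (Nb + k)%nat <= K Nb + D * (1 - u ^ k) / (1 - u)).
  { induction k.
    - rewrite Nat.add_0_r. simpl. replace (1 - 1) with 0 by ring. unfold Rdiv. rewrite Rmult_0_r, Rmult_0_l. lra.
    - rewrite Nat.add_succ_r, KS. specialize (HpD (S (Nb + k)) ltac:(lia)). rewrite HDu in HpD.
      assert (u ^ S (Nb + k) <= u ^ k).
      { replace (S (Nb + k)) with (k + S Nb)%nat by lia. rewrite pow_add.
        pose proof (Hule1 (S Nb)). pose proof (pow_lt u k ltac:(lra)). nra. }
      assert (D * u ^ S (Nb + k) <= D * u ^ k) by (apply Rmult_le_compat_l; auto).
      replace (K Nb + D * (1 - u ^ S k) / (1 - u)) with (K Nb + D * (1 - u ^ k) / (1 - u) + D * u ^ k)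
        by (simpl; field; lra).
      lra. }
  set (Kb := K Nb + D / (1 - u)).
  assert (HDu0 : 0 <= D / (1 - u)) by (apply div_nonneg; lra).
  assert (HK : forall n, CD_kernel c n x0 x0 <= Kb).
  { intros n. fold (K n). destruct (Compare_dec.le_lt_dec n Nb).
    - apply Rle_trans with (K Nb); [apply Kmono'; auto|]. unfold Kb. lra.
    - replace n with (Nb + (n - Nb))%nat by lia. eapply Rle_trans; [apply Kbd|]. unfold Kb.
      apply Rplus_le_compat_l. unfold Rdiv. apply Rmult_le_compat_r; [left; apply Rinv_0_lt_compat; lra|].
      pose proof (pow_lt u (n - Nb) ltac:(lra)). nra. }
  assert (HKb : 0 < Kb) by (unfold Kb; pose proof (Kge1 Nb); lra).
  assert (Hdec : forall eta, 0 < eta -> exists n, ja (S n) ^ 2 * (poly_eval c n x0 ^ 2 + poly_eval c (S n) x0 ^ 2) <= eta).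
  { intros eta He. destruct (big_pow P (2 * M ^ 2 * D / eta) HP) as [N3 HN3].
    exists (max Nb N3). set (n := max Nb N3).
    fold (p n) (p (S n)).
    assert (A1 := HpD n ltac:(unfold n; lia)). assert (A2 := HpD (S n) ltac:(unfold n; lia)).
    assert (A3 := HN3 n ltac:(unfold n; lia)).
    assert (Ha := HmM (S n) ltac:(lia)).
    assert (J : ja (S n) ^ 2 <= M ^ 2) by (apply pow_incr; lra).
    assert (P ^ n <= P ^ S n) by (apply Rle_pow; [lra|lia]).
    assert (D / P ^ S n <= D / P ^ n).
    { unfold Rdiv. apply Rmult_le_compat_l; auto. apply Rinv_le_contravar; auto. }
    assert (S1 : p n ^ 2 + p (S n) ^ 2 <= 2 * D / P ^ n).
    { replace (2 * D / P ^ n) with (D / P ^ n + D / P ^ n) by (field; specialize (HPn n); lra). lra. }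
    assert (S2 : 0 <= p n ^ 2 + p (S n) ^ 2) by (pose proof (pow2_ge_0 (p n)); pose proof (pow2_ge_0 (p (S n))); lra).
    apply Rle_trans with (M ^ 2 * (2 * D / P ^ n)).
    { apply Rmult_le_compat; auto. apply pow2_ge_0. }
    specialize (HPn n).
    apply Rmult_le_reg_r with (P ^ n); auto.
    replace (M ^ 2 * (2 * D / P ^ n) * P ^ n) with (2 * M ^ 2 * D) by (field; lra).
    apply Rmult_le_reg_l with (/ eta); [apply Rinv_0_lt_compat; lra|].
    replace (/ eta * (eta * P ^ n)) with (P ^ n) by (field; lra).
    unfold Rdiv in A3. lra. }
  apply (pp_of_mass F a b x0 (1 / (2 * Kb)) Hrho).
  { apply Rdiv_lt_0_compat; lra. }
  apply (mass F a b c ja jb x0 Kb Hrho Hp Hjac HKb HK Hdec).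
Qed.

Theorem corollary3p3
  (F : R -> R) (a b : R) (c : nat -> nat -> R) (ja jb : nat -> R) (x0 : R)
  (Hrho : compact_prob_distr F a b)
  (Hinf : infinite_support F)
  (Hp : orthonormal_polys F a b c)
  (Hjac : jacobi_params c ja jb)
  (Hbnd : exists m M, 0 < m /\ forall n, (1 <= n)%nat -> m <= ja n <= M)
  (Hlyap : exists g, 0 < g /\ lyapunov_exponent_is ja jb x0 g) :
  pure_point F x0 \/
  ~ Un_cv (fun n => poly_eval c n x0 ^ 2 / CD_kernel c n x0 x0) 0.
Proof.
  destruct (classic (Un_cv (fun n => poly_eval c n x0 ^ 2 / CD_kernel c n x0 x0) 0)) as [H|H].
  - left. exact (main_impl F a b c ja jb x0 Hrho Hp Hjac Hbnd Hlyap H).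
  - right. exact H.
Qed.
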